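(* Let $W$ be an sc-Banach space, $E=\mathbb R^n\oplus W$, $C=[0,\infty)^n\oplus W$, and let $N$ be a finite-dimensional subspace of $E$ in good position to $C$, with good complement $N^\perp$ and constant $c>0$ (as in the definition of good position). Let $\Sigma=\bigcup_{a\in C\cap N,\,a\ne0}\sigma_a\subset\{1,\dots,n\}$ and $\Sigma^c=\{1,\dots,n\}\setminus\Sigma$. Then $N^\perp\subset\mathbb R^{\Sigma^c}\oplus W$.
   Context: An sc-Banach space is a Banach space $W$ with nested Banach spaces $W=W_0\supset W_1\supset\cdots$, compact inclusions $W_n\to W_m$ ($m<n$), $\bigcap W_m$ dense in each $W_m$; $E$ has levels $\mathbb R^n\oplus W_m$ and $\|\cdot\|$ denotes its level-$0$ norm. For $a=(a_1,\dots,a_n,a_\infty)\in C$, $\sigma_a=\{i: a_i=0\}$. For $S\subset\{1,\dots,n\}$, $\mathbb R^S=\{x\in\mathbb R^n: x_j=0\text{ for all } j\notin S\}$. An sc-complement of $N$ is a closed subspace $N^\perp$ with $E_m=(N\cap E_m)\oplus(N^\perp\cap E_m)$ topologically for all $m$, both sc-subspaces. $N$ is in good position to $C$ if $N\cap C$ has nonempty interior in $N$ and there exist an sc-complement $N^\perp$ (a good complement) and $c>0$ such that for every $(n,m)\in N\oplus N^\perp$ with $\|m\|\le c\|n\|$: $n+m\in C$ iff $n\in C$. *)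

(* Defs.v *)
From HB Require Import structures.
From mathcomp Require Import all_boot all_order all_algebra.
From mathcomp Require Import all_classical all_reals all_analysis.
Set Implicit Arguments. Unset Strict Implicit. Unset Printing Implicit Defensive.
Import Order.TTheory GRing.Theory Num.Theory.
Import numFieldNormedType.Exports.
Local Open Scope classical_set_scope.
Local Open Scope ring_scope.

Definition lin_subspace (R : realType) (V : lmodType R) (S : set V) : Prop :=
  S 0 /\ forall (a : R) (x y : V), S x -> S y -> S (a *: x + y).

Definition cvg_nrm (R : realType) (V : zmodType) (nrm : V -> R)
  (u : nat -> V) (y : V) : Prop :=
  forall eps : R, 0 < eps -> exists N : nat, forall k, (N <= k)%N -> nrm (u k - y) < eps.

Definition cauchy_nrm (R : realType) (V : zmodType) (nrm : V -> R)
  (u : nat -> V) : Prop :=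
  forall eps : R, 0 < eps -> exists N : nat, forall k l, (N <= k)%N -> (N <= l)%N ->
    nrm (u k - u l) < eps.

Definition banach_on (R : realType) (V : lmodType R) (S : set V) (nrm : V -> R) : Prop :=
  lin_subspace S /\
  (forall x, S x -> 0 <= nrm x) /\
  (forall x, S x -> nrm x = 0 -> x = 0) /\
  (forall (a : R) x, S x -> nrm (a *: x) = `|a| * nrm x) /\
  (forall x y, S x -> S y -> nrm (x + y) <= nrm x + nrm y) /\
  (forall u : nat -> V, (forall k, S (u k)) -> cauchy_nrm nrm u ->
     exists2 y, S y & cvg_nrm nrm u y).

(* An sc-structure on the normed space W: nested levels W = W_0 ⊃ W_1 ⊃ ...,
   level m carried by the set lvl m with Banach norm nrm m, the level-0 norm
   being the norm of W; compact inclusions W_k -> W_m (m < k); W_oo dense in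
   every W_m. *)
Definition sc_banach (R : realType) (W : normedModType R)
  (lvl : nat -> set W) (nrm : nat -> W -> R) : Prop :=
  lvl 0%N = setT /\ nrm 0%N = (fun w => `|w|) /\
  (forall m, lvl m.+1 `<=` lvl m) /\
  (forall m, banach_on (lvl m) (nrm m)) /\
  (forall m k, (m < k)%N -> forall u : nat -> W, (forall j, lvl k (u j)) ->
     (exists B : R, forall j, nrm k (u j) <= B) ->
     exists phi : nat -> nat, (forall j, (phi j < phi j.+1)%N) /\
       exists2 y, lvl m y & cvg_nrm (nrm m) (u \o phi) y) /\
  (forall m x (eps : R), lvl m x -> 0 < eps ->
     exists2 y, (forall k, lvl k y) & nrm m (x - y) < eps).

Definition Espace (R : realType) (n : nat) (W : normedModType R) : Type :=
  ('rV[R]_n * W)%type.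

Definition Elvl (R : realType) (n : nat) (W : normedModType R)
  (lvl : nat -> set W) (m : nat) : set ('rV[R]_n * W) :=
  [set e | lvl m e.2].

(* level-m norm on E: max of the (max-)norm on R^n and the level-m norm on W;
   at level 0 this is the product norm of 'rV[R]_n * W. *)
Definition Enrm (R : realType) (n : nat) (W : normedModType R)
  (nrm : nat -> W -> R) (m : nat) (e : 'rV[R]_n * W) : R :=
  Num.max `|e.1| (nrm m e.2).

Definition Cquad (R : realType) (n : nat) (W : normedModType R) : set ('rV[R]_n * W) :=
  [set e : 'rV[R]_n * W | forall i : 'I_n, 0 <= e.1 ord0 i].

Definition sigma_of (R : realType) (n : nat) (W : normedModType R)
  (a : 'rV[R]_n * W) : set 'I_n :=
  [set i : 'I_n | a.1 ord0 i = 0].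

Definition Rsub (R : realType) (n : nat) (S : set 'I_n) : set 'rV[R]_n :=
  [set x : 'rV[R]_n | forall j : 'I_n, ~ S j -> x ord0 j = 0].

Definition span_of (R : realType) (V : lmodType R) (s : seq V) : set V :=
  [set v | exists c : 'I_(size s) -> R, v = \sum_(i < size s) c i *: s`_i].

Definition fin_dim_subspace (R : realType) (V : lmodType R) (N : set V) : Prop :=
  exists s : seq V, N = span_of s.

Definition sc_subspace (R : realType) (n : nat) (W : normedModType R)
  (lvl : nat -> set W) (nrm : nat -> W -> R) (F : set ('rV[R]_n * W)) : Prop :=
  lin_subspace F /\
  (forall m (u : nat -> 'rV[R]_n * W) y, (forall k, F (u k) /\ Elvl lvl m (u k)) ->
     Elvl lvl m y -> cvg_nrm (Enrm nrm m) u y -> F y) /\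
  (forall m x (eps : R), F x -> Elvl lvl m x -> 0 < eps ->
     exists2 y, F y /\ (forall k, Elvl lvl k y) & Enrm nrm m (x - y) < eps).

(* Nperp is an sc-complement of N: a closed subspace (closedness at level 0 is
   part of sc_subspace) such that E_m = (N ∩ E_m) ⊕ (Nperp ∩ E_m) topologically
   for all m (unique decomposition with bounded projection), N and Nperp being
   sc-subspaces. *)
Definition sc_complement (R : realType) (n : nat) (W : normedModType R)
  (lvl : nat -> set W) (nrm : nat -> W -> R) (N Nperp : set ('rV[R]_n * W)) : Prop :=
  sc_subspace lvl nrm N /\ sc_subspace lvl nrm Nperp /\
  forall m,
    (forall e, Elvl lvl m e -> exists x y,
        [/\ N x, Elvl lvl m x, Nperp y, Elvl lvl m y & e = x + y]) /\
    (forall e, N e -> Nperp e -> Elvl lvl m e -> e = 0) /\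
    (exists K : R, forall x y, N x -> Elvl lvl m x -> Nperp y -> Elvl lvl m y ->
        Enrm nrm m x <= K * Enrm nrm m (x + y)).

Definition nonempty_interior_in (R : realType) (n : nat) (W : normedModType R)
  (nrm : nat -> W -> R) (N C : set ('rV[R]_n * W)) : Prop :=
  exists a, N a /\ C a /\ exists2 r : R, 0 < r &
    forall b, N b -> Enrm nrm 0 (b - a) < r -> C b.

Definition good_complement (R : realType) (n : nat) (W : normedModType R)
  (lvl : nat -> set W) (nrm : nat -> W -> R) (C N Nperp : set ('rV[R]_n * W))
  (c : R) : Prop :=
  sc_complement lvl nrm N Nperp /\ 0 < c /\
  forall x y, N x -> Nperp y -> Enrm nrm 0 y <= c * Enrm nrm 0 x ->
    (C (x + y) <-> C x).

Definition good_position_with (R : realType) (n : nat) (W : normedModType R)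
  (lvl : nat -> set W) (nrm : nat -> W -> R) (C N Nperp : set ('rV[R]_n * W))
  (c : R) : Prop :=
  nonempty_interior_in nrm N (C `&` N) /\ good_complement lvl nrm C N Nperp c.

(* Main.v *)
Require Import Defs.
From HB Require Import structures.
From mathcomp Require Import all_boot all_order all_algebra.
From mathcomp Require Import all_classical all_reals all_analysis.
From mathcomp Require Import lra.
Import Order.TTheory GRing.Theory Num.Theory.
Import numFieldNormedType.Exports.
Local Open Scope classical_set_scope.
Local Open Scope ring_scope.

Lemma EnrmZ (R : realType) (n : nat) (W : normedModType R) (nrm : nat -> W -> R)
  (t : R) (e : 'rV[R]_n * W) : nrm 0%N = (fun w => `|w|) ->
  Enrm nrm 0 (t *: e) = `|t| * Enrm nrm 0 e.
Proof. by move=> nrm0; rewrite /Enrm nrm0 /= !normrZ -maxr_pMr ?normr_ge0. Qed.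

Theorem lemma6p6 (R : realType) (n : nat) (W : normedModType R)
  (lvl : nat -> set W) (nrm : nat -> W -> R)
  (N Nperp : set ('rV[R]_n * W)) (c : R) :
  sc_banach lvl nrm ->
  fin_dim_subspace N ->
  good_position_with lvl nrm (@Cquad R n W) N Nperp c ->
  let Sigma : set 'I_n :=
    [set i | exists a, (@Cquad R n W `&` N) a /\ a <> 0 /\ sigma_of a i] in
  Nperp `<=` [set e | Rsub (~` Sigma) e.1].
Proof.
move=> [_ [nrm0 _]] _ [_ [[_ [[[Np0 Nplin] _] _]] [c0 Hgood]]] Sigma e Ne j /=.
move=> /contrapT [a [[Ca Na] [a0 aj]]].
apply/eqP; apply: contraT => ej.
have Ea0 : 0 < Enrm nrm 0 a.
  rewrite /Enrm nrm0 lt_max !normr_gt0.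
  case: a a0 {Ca Na aj} => a1 a2 /= a0.
  have [h1|//] := eqVneq a1 0; have [h2|//] := eqVneq a2 0.
  by exfalso; apply: a0; rewrite h1 h2.
pose Ea := Enrm nrm 0 a. pose Ee := Enrm nrm 0 e.
have Ee0 : 0 <= Ee by rewrite /Ee /Enrm le_max normr_ge0.
pose k := c * Ea / (Ee + 1).
have k0 : 0 < k by rewrite /k divr_gt0 ?mulr_gt0 // ltr_wpDl.
pose t := - k * (e.1 ord0 j / `|e.1 ord0 j|).
have ejn : 0 < `|e.1 ord0 j| by rewrite normr_gt0.
have tabs : `|t| = k.
  have h1 : `|e.1 ord0 j / `|e.1 ord0 j| | = 1.
    by rewrite normf_div normr_id mulfV ?gt_eqF.
  by rewrite /t normrM h1 mulr1 normrN gtr0_norm.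
have Nt : Nperp (t *: e) by rewrite -[t *: e]addr0; apply: Nplin.
have Hb : Enrm nrm 0 (t *: e) <= c * Enrm nrm 0 a.
  rewrite EnrmZ // tabs -/Ee -/Ea /k.
  rewrite mulrAC ler_pdivrMr ?ltr_wpDl //.
  by rewrite ler_pM2l ?mulr_gt0 // lerDl.
have := (Hgood a (t *: e) Na Nt Hb).2 Ca j.
rewrite /= mxE mxE aj add0r /t.
have h : e.1 ord0 j / `|e.1 ord0 j| * e.1 ord0 j = `|e.1 ord0 j|.
  by rewrite mulrAC -expr2 -real_normK ?num_real // expr2 mulfK ?gt_eqF.
rewrite -mulrA h mulNr oppr_ge0 => h2.
by have := mulr_gt0 k0 ejn; rewrite ltNge h2.
Qed.
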